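(* Let $A(x)=\sin^2(2\pi x)$, $\hat m(A)=\frac{A(1/3)+A(2/3)}{2}$, $\eta(x)=\frac{x}{4}+\frac12$, $F(x)=A(\frac{x}{2})+A(\frac{x}{4}+\frac12)$, and for $x\in[0,1]$ and $n\in\mathbb{N}$ let $V_2^{n*}(x)=\sum_{i=0}^{n-1}[F(\eta^i(x))-2\hat m(A)]$. Then $V_2^{n*}$ converges uniformly on $[0,1]$ as $n\to\infty$.
   Context: $\eta^i$ denotes the $i$-th iterate of $\eta$, with $\eta^0$ the identity. *)

(* Defs.v *)
From Stdlib Require Import Reals.
Open Scope R_scope.

Definition A (x : R) : R := (sin (2 * PI * x)) ^ 2.

Definition mhat : R := (A (1/3) + A (2/3)) / 2.

Definition eta (x : R) : R := x / 4 + 1 / 2.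

Definition eta_iter (i : nat) (x : R) : R := Nat.iter i eta x.

Definition F (x : R) : R := A (x / 2) + A (x / 4 + 1 / 2).

Fixpoint V2 (n : nat) (x : R) : R :=
  match n with
  | O => 0
  | S k => V2 k x + (F (eta_iter k x) - 2 * mhat)
  end.

(* Main.v *)
Require Import Defs.
From Stdlib Require Import Reals Lra Lia.
Open Scope R_scope.

Lemma sin_lip a b : Rabs (sin a - sin b) <= Rabs (a - b).
Proof.
  destruct (MVT_abs sin cos b a) as [c [Hc _]].
  { intros; apply derivable_pt_lim_sin. }
  rewrite Hc. rewrite <- (Rmult_1_l (Rabs (a - b))) at 2.
  apply Rmult_le_compat_r; [apply Rabs_pos|].
  apply Rabs_le; apply COS_bound.
Qed.

Lemma A_lip u v : Rabs (A u - A v) <= 4 * PI * Rabs (u - v).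
Proof.
  unfold A.
  replace (sin (2 * PI * u) ^ 2 - sin (2 * PI * v) ^ 2) with
    ((sin (2 * PI * u) - sin (2 * PI * v)) * (sin (2 * PI * u) + sin (2 * PI * v))) by ring.
  rewrite Rabs_mult.
  pose proof (sin_lip (2 * PI * u) (2 * PI * v)) as H.
  replace (2 * PI * u - 2 * PI * v) with ((2 * PI) * (u - v)) in H by ring.
  rewrite Rabs_mult in H. rewrite (Rabs_right (2 * PI)) in H by (pose proof PI_RGT_0; lra).
  assert (Rabs (sin (2 * PI * u) + sin (2 * PI * v)) <= 2).
  { apply Rabs_le. pose proof (SIN_bound (2 * PI * u)); pose proof (SIN_bound (2 * PI * v)). lra. }
  pose proof (Rabs_pos (sin (2 * PI * u) - sin (2 * PI * v))).
  pose proof (Rabs_pos (sin (2 * PI * u) + sin (2 * PI * v))).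
  pose proof (Rabs_pos (u - v)). pose proof PI_RGT_0.
  eapply Rle_trans. apply Rmult_le_compat_l; [assumption|exact H0]. lra.
Qed.

Lemma F_term y : Rabs (F y - 2 * mhat) <= 3 * PI * Rabs (y - 2/3).
Proof.
  unfold F, mhat.
  pose proof (A_lip (y/2) (1/3)). pose proof (A_lip (y/4 + 1/2) (2/3)).
  replace (y / 2 - 1/3) with ((y - 2/3) * (1/2)) in H by field.
  replace (y / 4 + 1/2 - 2/3) with ((y - 2/3) * (1/4)) in H0 by field.
  rewrite Rabs_mult, (Rabs_right (1/2)) in H by lra.
  rewrite Rabs_mult, (Rabs_right (1/4)) in H0 by lra.
  replace (A (y / 2) + A (y / 4 + 1 / 2) - 2 * ((A (1 / 3) + A (2 / 3)) / 2)) with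
    ((A (y/2) - A (1/3)) + (A (y / 4 + 1 / 2) - A (2/3))) by field.
  eapply Rle_trans; [apply Rabs_triang|]. lra.
Qed.

Lemma eta_iter_eq i x : eta_iter i x - 2/3 = (x - 2/3) * (/4) ^ i.
Proof.
  induction i; unfold eta_iter in *.
  - simpl. ring.
  - change (Nat.iter (S i) eta x) with (eta (Nat.iter i eta x)).
    set (y := Nat.iter i eta x) in *. unfold eta. simpl pow.
    replace (y / 4 + 1 / 2 - 2 / 3) with ((y - 2/3) * / 4) by field.
    rewrite IHi. ring.
Qed.

Lemma term_bound i x : 0 <= x <= 1 ->
  Rabs (F (eta_iter i x) - 2 * mhat) <= 3 * PI * (/4) ^ i.
Proof.
  intros Hx. eapply Rle_trans; [apply F_term|].
  rewrite eta_iter_eq, Rabs_mult, (Rabs_right ((/4)^i)) by (apply Rle_ge, pow_le; lra).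
  assert (Rabs (x - 2/3) <= 1) by (apply Rabs_le; lra).
  pose proof (pow_le (/4) i ltac:(lra)). pose proof PI_RGT_0.
  pose proof (Rabs_pos (x - 2/3)).
  set (q := (/4)^i) in *. rewrite (Rmult_comm (Rabs _) q), <- Rmult_assoc.
  rewrite <- (Rmult_1_r (3 * PI * q)) at 2. apply Rmult_le_compat_l; [|assumption].
  apply Rmult_le_pos; lra.
Qed.

Lemma tail_bound n k x : 0 <= x <= 1 ->
  Rabs (V2 (n + k) x - V2 n x) <= 4 * PI * ((/4) ^ n - (/4) ^ (n + k)).
Proof.
  intros Hx. induction k.
  - rewrite Nat.add_0_r. replace (V2 n x - V2 n x) with 0 by ring.
    rewrite Rabs_R0. lra.
  - rewrite Nat.add_succ_r. simpl V2.
    replace (V2 (n + k) x + (F (eta_iter (n + k) x) - 2 * mhat) - V2 n x) with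
      ((V2 (n + k) x - V2 n x) + (F (eta_iter (n + k) x) - 2 * mhat)) by ring.
    eapply Rle_trans; [apply Rabs_triang|].
    pose proof (term_bound (n + k) x Hx). simpl pow. lra.
Qed.

Theorem mainTheorem6 :
  exists g : R -> R,
    forall eps : R, 0 < eps ->
      exists N : nat, forall n : nat, (N <= n)%nat ->
        forall x : R, 0 <= x <= 1 -> Rabs (V2 n x - g x) < eps.
Proof.
  assert (Hgeo : forall e, 0 < e -> exists N, forall n, (N <= n)%nat -> 4 * PI * (/4) ^ n < e).
  { intros e He. pose proof PI_RGT_0.
    destruct (pow_lt_1_zero (/4) ltac:(rewrite Rabs_right; lra) (e / (4 * PI))) as [N HN].
    { apply Rdiv_lt_0_compat; lra. }
    exists N. intros n Hn. specialize (HN n Hn).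
    rewrite Rabs_right in HN by (apply Rle_ge, pow_le; lra).
    apply (Rmult_lt_compat_l (4 * PI)) in HN; [|lra].
    replace (4 * PI * (e / (4 * PI))) with e in HN by (field; lra). exact HN. }
  assert (Hpos : forall n, 0 <= 4 * PI * (/4) ^ n).
  { intro; apply Rmult_le_pos; [pose proof PI_RGT_0; lra| apply pow_le; lra]. }
  assert (Hcau : forall x, 0 <= x <= 1 -> Cauchy_crit (fun n => V2 n x)).
  { intros x Hx e He. destruct (Hgeo e He) as [N HN]. exists N.
    intros n m Hn Hm. unfold Rdist.
    assert (forall a b, (N <= a)%nat -> (a <= b)%nat -> Rabs (V2 b x - V2 a x) < e).
    { intros a b Ha Hab. replace b with (a + (b - a))%nat by lia.
      eapply Rle_lt_trans; [apply tail_bound; auto|].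
      specialize (HN a Ha). specialize (Hpos (a + (b - a))%nat). lra. }
    destruct (Nat.le_ge_cases n m).
    - rewrite Rabs_minus_sym. apply H; unfold ge in *; auto.
    - apply H; unfold ge in *; auto. }
  exists (fun x => match Rle_dec 0 x, Rle_dec x 1 with
                   | left h1, left h2 => proj1_sig (R_complete _ (Hcau x (conj h1 h2)))
                   | _, _ => 0 end).
  intros eps Heps. destruct (Hgeo (eps/2) ltac:(lra)) as [N HN].
  exists N. intros n Hn x Hx.
  destruct (Rle_dec 0 x) as [h1|h1]; [|lra].
  destruct (Rle_dec x 1) as [h2|h2]; [|lra].
  destruct (R_complete _ (Hcau x (conj h1 h2))) as [l Hl]. simpl.
  destruct (Hl (eps/2) ltac:(lra)) as [M HM].
  specialize (HM (n + M)%nat ltac:(lia)). unfold Rdist in HM.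
  pose proof (tail_bound n M x Hx). specialize (HN n Hn).
  specialize (Hpos (n + M)%nat).
  replace (V2 n x - l) with (-(V2 (n + M) x - V2 n x) + (V2 (n + M) x - l)) by ring.
  eapply Rle_lt_trans; [apply Rabs_triang|]. rewrite Rabs_Ropp. lra.
Qed.
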